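(* Let $K$ be a field of characteristic $0$, let $a\in K^*$ be a nonzero constant and let $P_t(x)\in K[t,x]$ be a polynomial of degree $4$ in $x$ and of even degree $d$ in $t$. Let $V\to\mathbb{P}^1\times\mathbb{P}^1$ be the associated Châtelet surface bundle (conic bundle) and $\mathrm{De}(V)\subset\mathbb{P}^1\times\mathbb{P}^1$ its degeneracy locus. Then the projective variety $V$ is smooth over $K$ if and only if $\mathrm{De}(V)$ is a smooth curve.
   Context: Let $\tilde P_{t,t'}(x,x')=x'^4t'^dP_{t/t'}(x/x')\in K[t,t',x,x']$ be the bihomogenisation of $P_t(x)$, and set $P^{\infty\infty}_t(x)=\tilde P_{t,1}(x,1)$, $P^{\infty0}_t(x')=\tilde P_{t,1}(1,x')$, $P^{0\infty}_{t'}(x)=\tilde P_{1,t'}(x,1)$, $P^{00}_{t'}(x')=\tilde P_{1,t'}(1,x')$. Cover $\mathbb{P}^1\times\mathbb{P}^1$ (coordinates $t$ or $t'=1/t$ on the first factor, $x$ or $x'=1/x$ on the second) by the four affine opens $\mathcal{U}_{\infty\infty},\mathcal{U}_{\infty0},\mathcal{U}_{0\infty},\mathcal{U}_{00}$ (complements of $\infty$ or $0$ in each factor). $V$ is obtained by gluing the hypersurfaces $Y^2-aZ^2=W_{\infty\infty}^2P^{\infty\infty}_t(x)$, $Y^2-aZ^2=W_{\infty0}^2P^{\infty0}_t(x')$, $Y^2-aZ^2=W_{0\infty}^2P^{0\infty}_{t'}(x)$, $Y^2-aZ^2=W_{00}^2P^{00}_{t'}(x')$ in $\mathcal{U}_{\bullet\bullet}\times\mathbb{P}^2$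 (coordinates $(Y:Z:W_{\bullet\bullet})$) via $t'=t^{-1}$, $x'=x^{-1}$, $W_{\infty\infty}=W_{\infty0}x'^2=W_{0\infty}t'^{d/2}=W_{00}x'^2t'^{d/2}$, $W_{\infty0}=W_{0\infty}x^2t'^{d/2}=W_{00}t'^{d/2}$, $W_{0\infty}=W_{00}x'^2$. It maps to $\mathbb{P}^1\times\mathbb{P}^1$, and composing with the first projection gives the Châtelet surface bundle $V\to\mathbb{P}^1$ with fibres $y^2-az^2=P_\theta(x)$. The degeneracy locus $\mathrm{De}(V)$ is the curve $\tilde P_{t,t'}(x,x')=0$ in $\mathbb{P}^1\times\mathbb{P}^1$. *)

(* Defs.v *)
From HB Require Import structures.
From mathcomp Require Import all_boot all_order all_algebra.
From mathcomp Require Import mpoly.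
Set Implicit Arguments. Unset Strict Implicit. Unset Printing Implicit Defensive.
Import GRing.Theory.
Local Open Scope ring_scope.

(* P : {poly {poly K}} encodes P_t(x) = \sum_i (P`_i)(t) x^i, i.e. the
   coefficient of t^j x^i is (P`_i)`_j.  [c i j] below is that coefficient,
   transported to L. *)

(* Bihomogenisation x'^4 t'^d P(t/t', x/x') evaluated at polynomials
   T, T', X, X' (used to obtain the four affine charts). *)
Definition bihom (L : comNzRingType) (n : nat) (c : nat -> nat -> L) (d : nat)
    (T T' X X' : {mpoly L[n]}) : {mpoly L[n]} :=
  \sum_(i < 5) \sum_(j < d.+1)
     (c i j)%:MP * T ^+ j * T' ^+ (d - j) * X ^+ i * X' ^+ (4 - i).

Definition coefPL (K : fieldType) (L : closedFieldType) (f : {rmorphism K -> L})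
    (P : {poly {poly K}}) : nat -> nat -> L :=
  fun i j => f ((P`_i)`_j).

(* Chart polynomial P^{e1 e2}: e1 = true means the chart U_{oo .} (coordinate t),
   e1 = false the chart U_{0 .} (coordinate t'); similarly e2 for x / x'.
   u is the coordinate on the first P^1 factor, w on the second. *)
Definition Pchart (K : fieldType) (L : closedFieldType) (f : {rmorphism K -> L})
    (P : {poly {poly K}}) (d n : nat) (e1 e2 : bool) (u w : {mpoly L[n]}) :
    {mpoly L[n]} :=
  bihom (coefPL f P) d (if e1 then u else 1) (if e1 then 1 else u)
                       (if e2 then w else 1) (if e2 then 1 else w).

(* Jacobian criterion: the affine hypersurface F = 0 in A^n (over the
   algebraically closed field L) is smooth iff at every L-point of it some
   partial derivative of F is nonzero. *)
Definition affine_hyp_smooth (L : closedFieldType) (n : nat) (F : {mpoly L[n]}) :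
    Prop :=
  forall v : 'I_n -> L, F.@[v] = 0 -> exists i : 'I_n, (mderiv i F).@[v] != 0.

Definition v0 : 'I_4 := inord 0.
Definition v1 : 'I_4 := inord 1.
Definition v2 : 'I_4 := inord 2.
Definition v3 : 'I_4 := inord 3.
Definition c0 : 'I_2 := inord 0.
Definition c1 : 'I_2 := inord 1.

(* The three affine charts (W = 1, Y = 1, Z = 1) of the P^2 factor above the
   chart U_{e1 e2}; variables: 0 = t or t', 1 = x or x', 2,3 = the two
   remaining affine coordinates of P^2. *)
Definition Vchart_W (K : fieldType) (L : closedFieldType) (f : {rmorphism K -> L})
    (a : K) (P : {poly {poly K}}) (d : nat) (e1 e2 : bool) : {mpoly L[4]} :=
  'X_v2 ^+ 2 - (f a)%:MP * 'X_v3 ^+ 2 - Pchart f P d e1 e2 'X_v0 'X_v1.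

Definition Vchart_Y (K : fieldType) (L : closedFieldType) (f : {rmorphism K -> L})
    (a : K) (P : {poly {poly K}}) (d : nat) (e1 e2 : bool) : {mpoly L[4]} :=
  1 - (f a)%:MP * 'X_v2 ^+ 2 - 'X_v3 ^+ 2 * Pchart f P d e1 e2 'X_v0 'X_v1.

Definition Vchart_Z (K : fieldType) (L : closedFieldType) (f : {rmorphism K -> L})
    (a : K) (P : {poly {poly K}}) (d : nat) (e1 e2 : bool) : {mpoly L[4]} :=
  'X_v2 ^+ 2 - (f a)%:MP - 'X_v3 ^+ 2 * Pchart f P d e1 e2 'X_v0 'X_v1.

(* V is smooth over K: all 12 affine charts covering V are smooth after base
   change to the algebraically closed field L. *)
Definition V_smooth (K : fieldType) (L : closedFieldType) (f : {rmorphism K -> L})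
    (a : K) (P : {poly {poly K}}) (d : nat) : Prop :=
  forall e1 e2 : bool,
    [/\ affine_hyp_smooth (Vchart_W f a P d e1 e2),
        affine_hyp_smooth (Vchart_Y f a P d e1 e2) &
        affine_hyp_smooth (Vchart_Z f a P d e1 e2)].

Definition De_smooth (K : fieldType) (L : closedFieldType) (f : {rmorphism K -> L})
    (P : {poly {poly K}}) (d : nat) : Prop :=
  forall e1 e2 : bool, affine_hyp_smooth (Pchart f P d e1 e2 'X_c0 'X_c1).

(* Main.v *)
Require Import Defs.
From HB Require Import structures.
From mathcomp Require Import all_boot all_order all_algebra.
From mathcomp Require Import mpoly.
From mathcomp Require Import ring.
Set Implicit Arguments. Unset Strict Implicit. Unset Printing Implicit Defensive.
Import GRing.Theory.
Local Open Scope ring_scope.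

Section Gen.
Variable (L : comNzRingType) (n : nat).
Implicit Types (p q : {mpoly L[n]}) (v : 'I_n -> L).

Lemma mderiv1 i : mderiv i (1 : {mpoly L[n]}) = 0.
Proof. by rewrite -mpolyC1 mderivC. Qed.

Lemma meval_derX i j v : (mderiv i ('X_j : {mpoly L[n]})).@[v] = (j == i)%:R.
Proof.
rewrite mderivX mevalZ mnm1E; case: eqP => [->|_]; last by rewrite mul0r.
have -> : (U_(i) - U_(i))%MM = 0%MM by apply/mnmP=> k; rewrite mnmBE subnn mnm0E.
by rewrite mpolyX0 meval1 mulr1.
Qed.

Lemma meval_derXn i p j v :
  (mderiv i (p ^+ j)).@[v] = j%:R * p.@[v] ^+ j.-1 * (mderiv i p).@[v].
Proof.
elim: j => [|j IH]; first by rewrite expr0 mderiv1 meval0 !mul0r.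
rewrite exprS mderivM mevalD !mevalM IH /=.
case: j IH => [|j] IH; first by rewrite !mul0r mulr0 addr0 expr0 !mul1r; ring.
rewrite rmorphXn /= -[j.+2]addn1 natrD exprS; ring.
Qed.
End Gen.
Section Bihom.
Variable (L : comNzRingType) (n : nat) (c : nat -> nat -> L) (d : nat).

Definition dpow (t dt : L) (j : nat) := j%:R * t ^+ j.-1 * dt.

Definition BL (t t' x x' : L) : L :=
  \sum_(i < 5) \sum_(j < d.+1) c i j * t ^+ j * t' ^+ (d - j) * x ^+ i * x' ^+ (4 - i).

Definition BD (t t' x x' dt dt' dx dx' : L) : L :=
  \sum_(i < 5) \sum_(j < d.+1) c i j *
   (dpow t dt j * t' ^+ (d - j) * x ^+ i * x' ^+ (4 - i)
  + t ^+ j * dpow t' dt' (d - j) * x ^+ i * x' ^+ (4 - i)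
  + t ^+ j * t' ^+ (d - j) * dpow x dx i * x' ^+ (4 - i)
  + t ^+ j * t' ^+ (d - j) * x ^+ i * dpow x' dx' (4 - i)).

Lemma meval_bihom (T T' X X' : {mpoly L[n]}) v :
  (bihom c d T T' X X').@[v] = BL T.@[v] T'.@[v] X.@[v] X'.@[v].
Proof.
rewrite /bihom /BL rmorph_sum; apply: eq_bigr => i _.
rewrite rmorph_sum; apply: eq_bigr => j _.
by rewrite !rmorphM !rmorphXn /= mevalC.
Qed.

Lemma meval_der_bihom k (T T' X X' : {mpoly L[n]}) v :
  (mderiv k (bihom c d T T' X X')).@[v] =
  BD T.@[v] T'.@[v] X.@[v] X'.@[v]
     (mderiv k T).@[v] (mderiv k T').@[v] (mderiv k X).@[v] (mderiv k X').@[v].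
Proof.
rewrite /bihom /BD (raddf_sum (mderiv k)) rmorph_sum; apply: eq_bigr => i _.
rewrite (raddf_sum (mderiv k)) rmorph_sum; apply: eq_bigr => j _.
rewrite /= !mderivM mderivC !(mevalD, mevalM, mevalC, meval0) !meval_derXn !rmorphXn /= /dpow; ring.
Qed.

Lemma BD0 t t' x x' : BD t t' x x' 0 0 0 0 = 0.
Proof.
rewrite /BD big1 // => i _; rewrite big1 // => j _.
by rewrite /dpow !(mulr0, mul0r, addr0).
Qed.

Definition ifx (b : bool) (s : L) := if b then s else 1.
Definition ify (b : bool) (s : L) := if b then 1 else s.

Lemma meval_ifX (b : bool) (k0 : 'I_n) v :
  (if b then 'X_k0 else 1 : {mpoly L[n]}).@[v] = ifx b (v k0) /\
  (if b then 1 else 'X_k0 : {mpoly L[n]}).@[v] = ify b (v k0).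
Proof. by case: b; rewrite /ifx /ify mevalXU meval1. Qed.

Lemma meval_der_ifX (b : bool) (k0 k : 'I_n) v :
  (mderiv k (if b then 'X_k0 else 1 : {mpoly L[n]})).@[v] = (if b then (k0 == k)%:R else 0) /\
  (mderiv k (if b then 1 else 'X_k0 : {mpoly L[n]})).@[v] = (if b then 0 else (k0 == k)%:R).
Proof. by case: b; rewrite meval_derX mderiv1 meval0. Qed.

Definition PV e1 e2 (s r : L) := BL (ifx e1 s) (ify e1 s) (ifx e2 r) (ify e2 r).
Definition PD e1 e2 (s r : L) (b0 b1 : bool) :=
  BD (ifx e1 s) (ify e1 s) (ifx e2 r) (ify e2 r)
     (if e1 then b0%:R else 0) (if e1 then 0 else b0%:R)
     (if e2 then b1%:R else 0) (if e2 then 0 else b1%:R).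

Lemma PD0 e1 e2 s r : PD e1 e2 s r false false = 0.
Proof. by rewrite /PD; case: e1; case: e2; rewrite BD0. Qed.

Lemma chart_eval e1 e2 (k0 k1 k : 'I_n) v :
  (bihom c d (if e1 then 'X_k0 else 1) (if e1 then 1 else 'X_k0)
             (if e2 then 'X_k1 else 1) (if e2 then 1 else 'X_k1)).@[v]
    = PV e1 e2 (v k0) (v k1) /\
  (mderiv k (bihom c d (if e1 then 'X_k0 else 1) (if e1 then 1 else 'X_k0)
             (if e2 then 'X_k1 else 1) (if e2 then 1 else 'X_k1))).@[v]
    = PD e1 e2 (v k0) (v k1) (k0 == k) (k1 == k).
Proof.
rewrite meval_bihom meval_der_bihom.
have [-> ->] := meval_ifX e1 k0 v; have [-> ->] := meval_ifX e2 k1 v.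
have [-> ->] := meval_der_ifX e1 k0 k v; have [-> ->] := meval_der_ifX e2 k1 k v.
by [].
Qed.
End Bihom.
Lemma idx_ne : [&& v0 != v1, v0 != v2, v0 != v3, v1 != v2, v1 != v3, v2 != v3 & c0 != c1].
Proof. by rewrite /v0 /v1 /v2 /v3 /c0 /c1 -!(inj_eq val_inj) /= !inordK. Qed.

Section Charts.
Variables (K : fieldType) (L : closedFieldType) (f : {rmorphism K -> L}) (a : K)
  (P : {poly {poly K}}) (d : nat) (e1 e2 : bool).
Local Notation PVc := (PV (coefPL f P) d e1 e2).
Local Notation PDc := (PD (coefPL f P) d e1 e2).

Lemma PchartE n (k0 k1 k : 'I_n) v :
  (Pchart f P d e1 e2 'X_k0 'X_k1).@[v] = PVc (v k0) (v k1) /\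
  (mderiv k (Pchart f P d e1 e2 'X_k0 'X_k1)).@[v] = PDc (v k0) (v k1) (k0 == k) (k1 == k).
Proof. exact: chart_eval. Qed.

Lemma Wval v : (Vchart_W f a P d e1 e2).@[v] =
  v v2 ^+ 2 - f a * v v3 ^+ 2 - PVc (v v0) (v v1).
Proof.
have [E _] := PchartE v0 v1 v0 v.
by rewrite /Vchart_W !(rmorphB, rmorphXn, rmorphM) /= mevalC !mevalXU E.
Qed.

Lemma Wder v i : (mderiv i (Vchart_W f a P d e1 e2)).@[v] =
  2%:R * v v2 * (v2 == i)%:R - f a * (2%:R * v v3 * (v3 == i)%:R)
  - PDc (v v0) (v v1) (v0 == i) (v1 == i).
Proof.
have [_ E] := PchartE v0 v1 i v.
rewrite /Vchart_W !mderivB mderiv_mulC !mevalB mevalM mevalC !meval_derXn E.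
by rewrite !meval_derX !mevalXU !expr1.
Qed.

Lemma Yval v : (Vchart_Y f a P d e1 e2).@[v] =
  1 - f a * v v2 ^+ 2 - v v3 ^+ 2 * PVc (v v0) (v v1).
Proof.
have [E _] := PchartE v0 v1 v0 v.
by rewrite /Vchart_Y !(rmorphB, rmorphXn, rmorphM, rmorph1) /= mevalC !mevalXU E.
Qed.

Lemma Yder v i : (mderiv i (Vchart_Y f a P d e1 e2)).@[v] =
  - (f a * (2%:R * v v2 * (v2 == i)%:R))
  - (2%:R * v v3 * (v3 == i)%:R * PVc (v v0) (v v1)
     + v v3 ^+ 2 * PDc (v v0) (v v1) (v0 == i) (v1 == i)).
Proof.
have [E1 E] := PchartE v0 v1 i v.
rewrite /Vchart_Y !mderivB mderiv_mulC mderivM mderiv1 !mevalB !mevalD !mevalM mevalC.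
rewrite !meval_derXn E E1 !meval_derX !mevalXU !expr1 ?mevalC ?rmorph0; ring.
Qed.

Lemma Zval v : (Vchart_Z f a P d e1 e2).@[v] =
  v v2 ^+ 2 - f a - v v3 ^+ 2 * PVc (v v0) (v v1).
Proof.
have [E _] := PchartE v0 v1 v0 v.
by rewrite /Vchart_Z !(rmorphB, rmorphXn, rmorphM) /= mevalC !mevalXU E.
Qed.

Lemma Zder v i : (mderiv i (Vchart_Z f a P d e1 e2)).@[v] =
  2%:R * v v2 * (v2 == i)%:R
  - (2%:R * v v3 * (v3 == i)%:R * PVc (v v0) (v v1)
     + v v3 ^+ 2 * PDc (v v0) (v v1) (v0 == i) (v1 == i)).
Proof.
have [E1 E] := PchartE v0 v1 i v.
rewrite /Vchart_Z !mderivB mderivC mderivM !mevalB !mevalD !mevalM.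
rewrite !meval_derXn E E1 !meval_derX !mevalXU !expr1 ?mevalC ?rmorph0 ?meval0; ring.
Qed.
End Charts.
Lemma aux0 (L : fieldType) (X c q : L) : c != 0 -> q != 0 -> X = c * q -> X != 0.
Proof. by move=> hc hq ->; rewrite mulf_neq0. Qed.

Lemma aux1 (L : fieldType) (X z p c : L) :
  c != 0 -> z * z * p != 0 -> X * z = c * (z * z * p) -> X != 0.
Proof.
move=> hc hp H; apply/eqP => X0; move: H; rewrite X0 mul0r => /esym/eqP.
by rewrite mulf_eq0 (negbTE hc) (negbTE hp).
Qed.

Unset Implicit Arguments.

Theorem lemma2p1 (K : fieldType) (L : closedFieldType) (f : {rmorphism K -> L})
    (a : K) (P : {poly {poly K}}) (d : nat) :
  [pchar K] =i pred0 ->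
  a != 0 ->
  size P = 5%N ->
  (forall i : nat, leq (size P`_i) d.+1) ->
  (exists i : nat, size P`_i = d.+1) ->
  ~~ odd d ->
  (V_smooth f a P d <-> De_smooth f P d).
Proof.
move=> hchar ha _ _ _ _.
have h2 : (2%:R : L) != 0.
  have := (pcharf0P K).1 hchar 2.
  by rewrite -(rmorph_nat f) fmorph_eq0 => ->.
have hfa : f a != 0 by rewrite fmorph_eq0.
move: idx_ne => /andP[n01 /andP[n02 /andP[n03 /andP[n12 /andP[n13 /andP[n23 nc]]]]]].
have n10 := n01; rewrite eq_sym in n10.
have n20 := n02; rewrite eq_sym in n20.
have n30 := n03; rewrite eq_sym in n30.
have n21 := n12; rewrite eq_sym in n21.
have n31 := n13; rewrite eq_sym in n31.
have n32 := n23; rewrite eq_sym in n32.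
have nc' := nc; rewrite eq_sym in nc'.
split.
- move=> HV e1 e2 w hw.
  have [HW _ _] := HV e1 e2.
  pose v4 : 'I_4 -> L := fun k => if k == v0 then w c0 else if k == v1 then w c1 else 0.
  have e0 : v4 v0 = w c0 by rewrite /v4 eqxx.
  have e1' : v4 v1 = w c1 by rewrite /v4 (negbTE n10) eqxx.
  have e2' : v4 v2 = 0 by rewrite /v4 (negbTE n20) (negbTE n21).
  have e3' : v4 v3 = 0 by rewrite /v4 (negbTE n30) (negbTE n31).
  have [E2 _] := PchartE f P d e1 e2 c0 c1 c0 w.
  case: (HW v4).
    by rewrite Wval e0 e1' e2' e3' -E2 hw; ring.
  move=> i; rewrite Wder e0 e1' e2' e3'.
  case: (v0 =P i) => [<-|h0].
    rewrite ?eqxx (negbTE n10) => H; exists c0.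
    have [_ ->] := PchartE f P d e1 e2 c0 c1 c0 w.
    rewrite ?eqxx (negbTE nc'); move: H.
    by rewrite !(mulr0, mul0r, subr0, sub0r, oppr0) oppr_eq0.
  case: (v1 =P i) => [<-|h1].
    rewrite ?eqxx ?(negbTE n01) => H; exists c1.
    have [_ ->] := PchartE f P d e1 e2 c0 c1 c1 w.
    rewrite ?eqxx (negbTE nc); move: H.
    by rewrite !(mulr0, mul0r, subr0, sub0r, oppr0) oppr_eq0.
  by rewrite PD0 !(mulr0, mul0r, subr0, sub0r, oppr0) eqxx.
- move=> HD e1 e2; split.
  + move=> v hv.
    case: (eqVneq (v v2) 0) => y0; last first.
      exists v2; rewrite Wder eqxx (negbTE n32) (negbTE n02) (negbTE n12) PD0 /=.
      by apply: (aux0 (c := 2%:R) (q := v v2)) => //; ring.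
    case: (eqVneq (v v3) 0) => z0; last first.
      exists v3; rewrite Wder eqxx (negbTE n23) (negbTE n03) (negbTE n13) PD0 /=.
      apply: (aux0 (c := - (2%:R * f a)) (q := v v3)) => //; last by ring.
      by rewrite oppr_eq0 mulf_neq0.
    pose w : 'I_2 -> L := fun c => if c == c0 then v v0 else v v1.
    have w0 : w c0 = v v0 by rewrite /w eqxx.
    have w1 : w c1 = v v1 by rewrite /w (negbTE nc').
    have [E _] := PchartE f P d e1 e2 c0 c1 c0 w.
    have hw : (Pchart f P d e1 e2 'X_c0 'X_c1).@[w] = 0.
      rewrite E w0 w1; move: hv; rewrite Wval y0 z0 !expr2 !mulr0 subr0 sub0r.
      by move/eqP; rewrite oppr_eq0 => /eqP.
    case: (HD e1 e2 w hw) => j.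
    have [_ ->] := PchartE f P d e1 e2 c0 c1 j w.
    rewrite w0 w1.
    case: (c0 =P j) => [<-|hj0].
      rewrite ?eqxx ?(negbTE nc') => H; exists v0.
      rewrite Wder eqxx (negbTE n20) (negbTE n30) (negbTE n10) y0 z0.
      by rewrite !(mulr0, mul0r, subr0, sub0r, oppr0) oppr_eq0.
    case: (c1 =P j) => [_|hj1].
      rewrite ?eqxx ?(negbTE nc) => H; exists v1.
      rewrite Wder eqxx (negbTE n21) (negbTE n31) (negbTE n01) y0 z0.
      by rewrite !(mulr0, mul0r, subr0, sub0r, oppr0) oppr_eq0.
    by rewrite PD0 eqxx.
  + move=> v hv.
    case: (eqVneq (v v2) 0) => y0; last first.
      exists v2; rewrite Yder eqxx (negbTE n32) (negbTE n02) (negbTE n12) PD0 /=.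
      apply: (aux0 (c := - (2%:R * f a)) (q := v v2)) => //; last by ring.
      by rewrite oppr_eq0 mulf_neq0.
    exists v3; rewrite Yder eqxx (negbTE n23) (negbTE n03) (negbTE n13) PD0 /= y0.
    move: hv; rewrite Yval y0 !expr2 mulr0 mulr0 subr0 => /eqP; rewrite subr_eq0 => /eqP hz.
    apply: (aux1 (z := v v3) (p := PV (coefPL f P) d e1 e2 (v v0) (v v1)) (c := - 2%:R)).
    - by rewrite oppr_eq0.
    - by rewrite -hz oner_neq0.
    - ring.
  + move=> v hv.
    case: (eqVneq (v v2) 0) => y0; last first.
      exists v2; rewrite Zder eqxx (negbTE n32) (negbTE n02) (negbTE n12) PD0 /=.
      by apply: (aux0 (c := 2%:R) (q := v v2)) => //; ring.
    exists v3; rewrite Zder eqxx (negbTE n23) (negbTE n03) (negbTE n13) PD0 /= y0.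
    move: hv; rewrite Zval y0 !expr2 mulr0 sub0r => /eqP; rewrite subr_eq0 => /eqP hz.
    apply: (aux1 (z := v v3) (p := PV (coefPL f P) d e1 e2 (v v0) (v v1)) (c := - 2%:R)).
    - by rewrite oppr_eq0.
    - by rewrite -hz oppr_eq0.
    - ring.
Qed.
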